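(* Let $\mathbb{K}$ be either $\mathbb{R}$ or $\mathbb{C}$, with all coefficients and solutions in $\mathbb{K}$. Let $D$ be a positive integer and let $1 \le D < q \le \infty$. For all $k\in\{1,\dots,D\}$ let $\mathcal{D}_k = \{(d_1,\dots,d_k)\in\mathbb{N}^k : d_1+\cdots+d_k\le D\}$. Let $I$ be an infinite set and $\mathbf{x} = (x_j)_{j=1}^\infty$. For all $i\in I$ and $d\in\{1,\dots,D\}$ let $\mathbf{a}_{i,d} = (a_{i,d,j})_{j=1}^\infty \in \ell^{q/(q-d)}$ and $(\mathbf{a}_{i,d},\mathbf{x}^d) = \sum_{j=1}^\infty a_{i,d,j} x_j^d$. For all $i\in I$ define the multiplicative polynomial \[ P_i(\mathbf{x}) = \sum_{k=1}^{D}\sum_{(d_1,\dots,d_k)\in\mathcal{D}_k} (\mathbf{a}_{i,d_1},\mathbf{x}^{d_1})(\mathbf{a}_{i,d_2},\mathbf{x}^{d_2})\cdots(\mathbf{a}_{i,d_k},\mathbf{x}^{d_k}) \] (equivalently $\sum_{k=1}^D\sum_{\Delta\in\mathcal{D}_k}\sum_{J\in\mathbb{N}^k} a_{i,\Delta,J}x_J^\Delta$ with multiplicative coefficients $a_{i,(d_1,\dots,d_k),(j_1,\dots,j_k)} = a_{i,d_1,j_1}\cdots a_{i,d_k,j_k}$ and $x_J^\Delta = x_{j_1}^{d_1}\cdots x_{j_k}^{d_k}$). Let $M>0$ and $\mathbf{b} = (b_i)_{i\in I}$ with $b_i\in\mathbb{K}$. If for every $\varepsilon>0$ and every finite subset $S$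 of $I$ the finite set of inequalities $\{|P_i(\mathbf{x}) - b_i| \le \varepsilon : i\in S\}$ has a solution $\mathbf{x}_{S,\varepsilon}\in\ell^q$ with $\|\mathbf{x}_{S,\varepsilon}\|_q\le M$, then the infinite set of equations $\{P_i(\mathbf{x}) = b_i : i\in I\}$ has an exact solution $\mathbf{x}\in\ell^q$ with $\|\mathbf{x}\|_q\le M$.
   Context: $\mathbb{N}=\{1,2,3,\dots\}$. For $q=\infty$ one sets $q/(q-d)=1$ and $q/d=\infty$. $\ell^p$ ($1\le p<\infty$) denotes sequences with $\|\mathbf{a}\|_p=(\sum_j|a_j|^p)^{1/p}<\infty$ and $\ell^\infty$ bounded sequences with the sup norm; $\mathbf{x}^d=(x_j^d)_{j\ge1}$. For $\mathbf{x}\in\ell^q$ each series $(\mathbf{a}_{i,d},\mathbf{x}^d)$ converges absolutely by Hölder's inequality. *)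

(* Defs.v *)
From HB Require Import structures.
From mathcomp Require Import all_boot all_order all_algebra.
From mathcomp Require Import all_classical all_reals all_analysis.
From mathcomp Require Import complex.
Set Implicit Arguments. Unset Strict Implicit. Unset Printing Implicit Defensive.
Import Order.TTheory GRing.Theory Num.Theory.
Import numFieldNormedType.Exports.
Local Open Scope ring_scope.
Local Open Scope classical_set_scope.

(* R : realType plays the role of the
   real numbers; the field K of coefficients is either R itself or the complex
   numbers R[i] (from mathcomp-real-closed).  absK : K -> R is the modulus. *)

Section Defs.
Variables (R : realType) (K : numFieldType) (absK : K -> R).

Definition Kseries_to (u : nat -> K) (l : K) : Prop :=
  forall e : R, 0 < e -> exists N : nat, forall n : nat, (N <= n)%N ->
    absK (\sum_(j < n) u j - l) < e.

Definition Ksum (u : nat -> K) : K := xget 0 (Kseries_to u).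

Definition lp_mem (p : \bar R) (x : nat -> K) : Prop :=
  match p with
  | r%:E => cvgn (series (fun j => absK (x j) `^ r))
  | +oo%E => exists B : R, forall j, absK (x j) <= B
  | -oo%E => False
  end.

Definition lp_norm (p : \bar R) (x : nat -> K) : R :=
  match p with
  | r%:E => (limn (series (fun j => absK (x j) `^ r))) `^ r^-1
  | +oo%E => sup (range (fun j => absK (x j)))
  | -oo%E => 0
  end.

(* the exponent q/(q-d), with the convention q/(q-d) = 1 for q = +oo *)
Definition dual_exp (q : \bar R) (d : nat) : \bar R :=
  match q with
  | r%:E => (r / (r - d%:R))%:E
  | +oo%E => 1%:E
  | -oo%E => -oo%E
  end.

Definition pairing (a : nat -> K) (x : nat -> K) (d : nat) : K :=
  Ksum (fun j => a j * x j ^+ d).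

Definition mult_poly (D : nat) (a : nat -> nat -> K) (x : nat -> K) : K :=
  \sum_(1 <= k < D.+1)
    \sum_(t : {ffun 'I_k -> 'I_D.+1} |
            [forall l, (0 < t l)%N] && (\sum_(l < k) (t l : nat) <= D)%N)
      \prod_(l < k) pairing (a (t l)) x (t l).

Definition theorem4_stmt : Prop :=
  forall (D : nat) (q : \bar R) (I : Type)
         (a : I -> nat -> nat -> K) (b : I -> K) (M : R),
    (1 <= D)%N -> (D%:R%:E < q)%E ->
    infinite_set [set: I] ->
    (forall i d, (1 <= d <= D)%N -> lp_mem (dual_exp q d) (a i d)) ->
    0 < M ->
    (forall (eps : R) (S : set I), 0 < eps -> finite_set S ->
       exists x : nat -> K, lp_mem q x /\ lp_norm q x <= M /\
         forall i, S i -> absK (mult_poly D (a i) x - b i) <= eps) ->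
    exists x : nat -> K, lp_mem q x /\ lp_norm q x <= M /\
      forall i, mult_poly D (a i) x = b i.
End Defs.

(* Main.v *)
Require Import Defs.
From HB Require Import structures.
From mathcomp Require Import all_boot all_order all_algebra.
From mathcomp Require Import all_classical all_reals all_analysis.
From mathcomp Require Import complex.
From mathcomp Require Import ring lra.
Import Order.TTheory GRing.Theory Num.Theory.
Import numFieldNormedType.Exports.
Local Open Scope ring_scope.
Section Generic.
Variables (R : realType) (K : numFieldType) (absK : K -> R).
Hypothesis aK0 : absK 0 = 0.
Hypothesis aK_ge0 : forall x, 0 <= absK x.
Hypothesis aK_eq0 : forall x, absK x = 0 -> x = 0.
Hypothesis aKD : forall x y, absK (x + y) <= absK x + absK y.
Hypothesis aKM : forall x y, absK (x * y) = absK x * absK y.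
Hypothesis aKN : forall x, absK (- x) = absK x.

Lemma aKB x y : absK (x - y) <= absK x + absK y.
Proof. by apply: (le_trans (aKD _ _)); rewrite aKN. Qed.

Lemma aK_sub_ge x y : absK x - absK y <= absK (x - y).
Proof.
rewrite lerBlDr; apply: le_trans (aKD _ _); by rewrite subrK.
Qed.

Lemma aK_sym x y : absK (x - y) = absK (y - x).
Proof. by rewrite -aKN opprB. Qed.

Lemma aKX x n : absK (x ^+ n) = absK x ^+ n.
Proof.
elim: n => [|n IH]; last by rewrite !exprS aKM IH.
rewrite !expr0; have h := aKM 1 1; rewrite mul1r in h.
have : absK 1 != 0 by apply/eqP => /aK_eq0 /eqP; rewrite oner_eq0.
move=> nz; apply: (mulfI nz); by rewrite mulr1 -h.
Qed.

Lemma aK_sum (I0 : Type) (r : seq I0) (P : pred I0) (F : I0 -> K) :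
  absK (\sum_(i <- r | P i) F i) <= \sum_(i <- r | P i) absK (F i).
Proof.
elim: r => [|i r IH]; first by rewrite !big_nil aK0.
rewrite !big_cons; case: (P i) => //.
by apply: le_trans (aKD _ _) _; rewrite lerD2l.
Qed.

Lemma aK_powB x y n C : absK x <= C -> absK y <= C ->
  absK (y ^+ n - x ^+ n) <= n%:R * C ^+ n.-1 * absK (y - x).
Proof.
move=> hx hy; have C0 : 0 <= C by apply: le_trans hx.
elim: n => [|n IH]; first by rewrite subrr aK0 mul0r mul0r.
have -> : y ^+ n.+1 - x ^+ n.+1 = y * (y ^+ n - x ^+ n) + x ^+ n * (y - x).
  by rewrite !exprS; ring.
apply: le_trans (aKD _ _) _; rewrite !aKM aKX.
case: n IH => [|n] IH.
  by rewrite subrr aK0 mulr0 add0r expr0 mul1r /= expr0 mulr1 mul1r.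
have h1 : absK y * absK (y ^+ n.+1 - x ^+ n.+1) <= C * (n.+1%:R * C ^+ n * absK (y - x)).
  by apply: ler_pM => //; rewrite aK_ge0.
have h2 : absK x ^+ n.+1 * absK (y - x) <= C ^+ n.+1 * absK (y - x).
  by apply: ler_wpM2r => //; apply: lerXn2r => //; rewrite ?nnegrE ?aK_ge0.
apply: le_trans (lerD h1 h2) _ => /=.
rewrite [n.+2%:R]mulrSr exprS; rewrite mulrDl mul1r le_eqVlt; apply/orP; left; apply/eqP; ring.
Qed.

Definition inBall (q : \bar R) (M : R) (y : nat -> K) : Prop :=
  match q with
  | r%:E => forall n, \sum_(j < n) absK (y j) `^ r <= M `^ r
  | +oo%E => forall j, absK (y j) <= M
  | -oo%E => False
  end.

Lemma series_ndecr (f : nat -> R) : (forall j, 0 <= f j) ->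
  {homo series f : n m / (n <= m)%N >-> n <= m}.
Proof.
move=> f0 n m nm; rewrite seriesEnat /=.
have := @nondecreasing_series R f predT 0 (fun j _ _ => f0 j).
by move=> /(_ n m nm).
Qed.

Lemma series_ord (f : nat -> R) n : series f n = \sum_(j < n) f j.
Proof. by rewrite seriesEord. Qed.

Lemma series_le_lim (f : nat -> R) n : (forall j, 0 <= f j) ->
  cvgn (series f) -> \sum_(j < n) f j <= limn (series f).
Proof.
move=> f0 cf; rewrite -series_ord; exact: (nondecreasing_cvgn_le (@series_ndecr f f0) cf n).
Qed.

Lemma lim_ge0 (f : nat -> R) : (forall j, 0 <= f j) ->
  cvgn (series f) -> 0 <= limn (series f).
Proof.
move=> f0 cf; have := @series_le_lim f 0 f0 cf; by rewrite big_ord0.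
Qed.

Lemma powRK (r x : R) : 0 < r -> 0 <= x -> (x `^ r^-1) `^ r = x.
Proof.
move=> r0 x0; rewrite -powRrM mulVf ?gt_eqF // powRr1 //.
Qed.

Lemma powRK' (r x : R) : 0 < r -> 0 <= x -> (x `^ r) `^ r^-1 = x.
Proof.
move=> r0 x0; rewrite -powRrM mulfV ?gt_eqF // powRr1 //.
Qed.

Lemma inBall_of_lp q M y : (0 < q)%E -> 0 < M ->
  lp_mem absK q y -> lp_norm absK q y <= M -> inBall q M y.
Proof.
case: q => [r||] //=; rewrite ?lte_fin => r0 M0.
  move=> cf hn n; set f := fun j => absK (y j) `^ r.
  have f0 : forall j, 0 <= f j by move=> j; exact: powR_ge0.
  apply: le_trans (@series_le_lim f n f0 cf) _.
  have L0 := @lim_ge0 f f0 cf.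
  rewrite -(@powRK r _ r0 L0); apply: ge0_ler_powR => //; rewrite ?nnegrE ?powR_ge0 //; exact: ltW.
move=> [B hB] hn j; apply: le_trans hn.
by apply: ub_le_sup; [exists B => _ [k _ <-]; exact: hB | exists j].
Qed.

Lemma lp_of_inBall q M y : (0 < q)%E -> 0 < M ->
  inBall q M y -> lp_mem absK q y /\ lp_norm absK q y <= M.
Proof.
case: q => [r||] //=; rewrite ?lte_fin => r0 M0.
  move=> hb; set f := fun j => absK (y j) `^ r.
  have f0 : forall j, 0 <= f j by move=> j; exact: powR_ge0.
  have cf : cvgn (series f).
    apply: nondecreasing_is_cvgn; first exact: (@series_ndecr f f0).
    by exists (M `^ r) => _ [n _ <-]; rewrite series_ord; exact: hb.
  split => //.
  have L0 := @lim_ge0 f f0 cf.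
  have : limn (series f) <= M `^ r.
    apply: limr_le => //; apply: nearW => n; rewrite series_ord; exact: hb.
  move=> hL; rewrite -(@powRK' r _ r0 (ltW M0)).
  apply: ge0_ler_powR => //; rewrite ?nnegrE ?powR_ge0 ?invr_ge0 ?(ltW r0) //.
move=> hb; split; first by exists M.
apply: ge_sup; first by exists (absK (y 0%N)), 0%N.
by move=> _ [j _ <-]; exact: hb.
Qed.

Lemma inBall_bound q M y : (0 < q)%E -> 0 < M -> inBall q M y -> forall j, absK (y j) <= M.
Proof.
case: q => [r||] //=; rewrite ?lte_fin => r0 M0 // hb j.
have h : absK (y j) `^ r <= M `^ r.
  apply: le_trans (hb j.+1); rewrite big_ord_recr /= lerDr.
  by apply: sumr_ge0 => i _; exact: powR_ge0.
rewrite -(@powRK' r _ r0 (aK_ge0 (y j))) -(@powRK' r _ r0 (ltW M0)).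
apply: ge0_ler_powR => //; rewrite ?nnegrE ?powR_ge0 ?invr_ge0 ?(ltW r0) //.
Qed.

Lemma series_tail (f : nat -> R) : (forall j, 0 <= f j) -> cvgn (series f) ->
  forall e, 0 < e -> exists N, forall n m, (N <= n)%N -> \sum_(n <= j < m) f j <= e.
Proof.
move=> f0 cf e e0.
have := @cvgr_dist_lt _ _ _ _ _ (series f) _ cf e e0; move=> [N _ hN]; exists N => n m Nn.
have [mn|nm] := leqP m n; first by rewrite big_geq // ltW.
rewrite -sub_series_geq; last exact: ltnW.
have h := hN n Nn; rewrite /= in h.
have : series f m <= limn (series f).
  exact: (nondecreasing_cvgn_le (@series_ndecr f f0) cf m).
move=> hm; apply: ltW; apply: le_lt_trans (ler_norm _) _ => //.
apply: le_lt_trans h.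
have hn : series f n <= limn (series f).
  exact: (nondecreasing_cvgn_le (@series_ndecr f f0) cf n).
have hnm : series f n <= series f m by apply: (@series_ndecr f f0); exact: ltnW.
rewrite !ger0_norm ?subr_ge0 // lerD2r //.
Qed.

Lemma sub_sum_le (f : nat -> R) n m : (forall j, 0 <= f j) ->
  \sum_(n <= j < m) f j <= \sum_(j < m) f j.
Proof.
move=> f0; have [mn|nm] := leqP m n.
  by rewrite big_geq //; apply: sumr_ge0 => i _.
rewrite -(big_mkord xpredT) (@big_cat_nat _ _ _ n 0 m) /= ?lerDr ?(ltnW nm) //.
by apply: sumr_ge0 => i _.
Qed.

Lemma tail_unif q M D d (a : nat -> K) : 0 < M -> (1 <= d <= D)%N ->
  (D%:R%:E < q)%E -> lp_mem absK (dual_exp q d) a ->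
  forall eps, 0 < eps -> exists N, forall y, inBall q M y -> forall n m, (N <= n)%N ->
    \sum_(n <= j < m) absK (a j) * absK (y j) ^+ d <= eps.
Proof.
move=> M0 /andP[d1 dD]; case: q => [r||] //=; rewrite ?lte_fin => Dr ha eps eps0; last first.
  set f := fun j => absK (a j) `^ 1.
  have f0 : forall j, 0 <= f j by move=> j; exact: powR_ge0.
  have Md0 : 0 < M ^+ d by exact: exprn_gt0.
  have [N hN] := @series_tail f f0 ha _ (divr_gt0 eps0 Md0).
  exists N => y hy n m Nn.
  apply: (@le_trans _ _ (\sum_(n <= j < m) f j * M ^+ d)).
    apply: ler_sum => j _; rewrite /f powRr1 ?aK_ge0 //.
    apply: ler_wpM2l; first exact: aK_ge0.
    by apply: lerXn2r; rewrite ?nnegrE ?aK_ge0 ?(ltW M0) // hy.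
  rewrite -mulr_suml -ler_pdivlMr //; exact: hN.
have dR : (0 < d%:R :> R) by rewrite ltr0n.
have Dd : (d%:R <= D%:R :> R) by rewrite ler_nat.
have dr : d%:R < r by apply: le_lt_trans Dd Dr.
have r0 : 0 < r by apply: lt_trans dR dr.
set s := r / (r - d%:R); set p := r / d%:R.
have rd0 : 0 < r - d%:R by rewrite subr_gt0.
have s0 : 0 < s by apply: divr_gt0.
have p0 : 0 < p by apply: divr_gt0.
have sp : s^-1 + p^-1 = 1.
  rewrite /s /p !invf_div; field; exact: lt0r_neq0.
set f := fun j => absK (a j) `^ s.
have f0 : forall j, 0 <= f j by move=> j; exact: powR_ge0.
have Mr0 : 0 < M `^ r by apply: powR_gt0.
set lam := (p * eps / (2 * M `^ r)) `^ p^-1.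
have lam0 : 0 < lam.
  by apply: powR_gt0; apply: divr_gt0; [apply: mulr_gt0 | apply: mulr_gt0].
have lamp : lam `^ p = p * eps / (2 * M `^ r).
  apply: powRK => //; apply: ltW; apply: divr_gt0; [apply: mulr_gt0 | apply: mulr_gt0] => //.
set c1 := lam^-1 `^ s / s.
have c10 : 0 < c1 by apply: divr_gt0 => //; apply: powR_gt0; rewrite invr_gt0.
have [N hN] := @series_tail f f0 ha _ (divr_gt0 (divr_gt0 eps0 (ltr0n _ 2)) c10).
exists N => y hy n m Nn.
have key : forall j, absK (a j) * absK (y j) ^+ d <=
    c1 * f j + lam `^ p / p * absK (y j) `^ r.
  move=> j; have A0 := aK_ge0 (a j); have B0 := aK_ge0 (y j).
  have := @conjugate_powR R (absK (a j) / lam) (lam * absK (y j) ^+ d) s p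
    (divr_ge0 A0 (ltW lam0)) (mulr_ge0 (ltW lam0) (exprn_ge0 _ B0)) s0 p0 sp.
  have -> : absK (a j) / lam * (lam * absK (y j) ^+ d) = absK (a j) * absK (y j) ^+ d.
    by field; apply: lt0r_neq0.
  move/le_trans; apply; rewrite le_eqVlt; apply/orP; left; apply/eqP.
  rewrite (@powRM R lam) ?(ltW lam0) ?exprn_ge0 // (@powRM R (absK (a j))) ?invr_ge0 ?(ltW lam0) //.
  rewrite -powR_mulrn // -powRrM /p mulrCA mulfV ?mulr1 ?gt_eqF //.
  rewrite /c1 /f; ring.
apply: le_trans (ler_sum _ (fun j _ => key j)) _.
rewrite big_split /= -!mulr_sumr.
have h1 : c1 * \sum_(n <= i < m) f i <= eps / 2.
  by rewrite mulrC -ler_pdivlMr //; exact: hN.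
have h2 : lam `^ p / p * \sum_(n <= i < m) absK (y i) `^ r <= eps / 2.
  rewrite lamp; apply: (@le_trans _ _ (p * eps / (2 * M `^ r) / p * M `^ r)).
    apply: ler_wpM2l.
      apply: divr_ge0 => //; last exact: ltW.
      apply: divr_ge0; [apply: mulr_ge0 | apply: mulr_ge0] => //; exact: ltW.
    apply: le_trans (hy m); apply: sub_sum_le => j; exact: powR_ge0.
  rewrite le_eqVlt; apply/orP; left; apply/eqP; field.
  by apply/andP; split; apply: lt0r_neq0.
by apply: le_trans (lerD h1 h2) _; rewrite -splitr.
Qed.

Hypothesis Kcomplete : forall u : nat -> K,
  (forall e, 0 < e -> exists N, forall n m, (N <= n)%N ->
     absK (\sum_(n <= j < m) u j) <= e) ->
  exists l, Kseries_to absK u l.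

Lemma sum_nat_split (u : nat -> K) N n : (N <= n)%N ->
  \sum_(j < n) u j - \sum_(j < N) u j = \sum_(N <= j < n) u j.
Proof.
move=> Nn; rewrite -!(big_mkord xpredT) (@big_cat_nat _ _ _ N 0 n) //=.
by rewrite addrC addrK.
Qed.

Lemma pairing_approx q M D d (a : nat -> K) : 0 < M -> (1 <= d <= D)%N ->
  (D%:R%:E < q)%E -> lp_mem absK (dual_exp q d) a ->
  forall eps, 0 < eps -> exists N, forall y, inBall q M y ->
    absK (pairing absK a y d - \sum_(j < N) a j * y j ^+ d) <= eps.
Proof.
move=> M0 hd hq ha.
have tailb : forall y n m, absK (\sum_(n <= j < m) a j * y j ^+ d) <=
    \sum_(n <= j < m) absK (a j) * absK (y j) ^+ d.
  move=> y n m; apply: le_trans; first exact: aK_sum.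
  by apply: ler_sum => j _; rewrite aKM aKX.
move=> eps eps0; have [N hN] := @tail_unif q M D d a M0 hd hq ha eps eps0.
exists N => y hy.
set u := fun j => a j * y j ^+ d.
have ex : exists l, Kseries_to absK u l.
  apply: Kcomplete => e e0; have [N' hN'] := @tail_unif q M D d a M0 hd hq ha e e0.
  exists N' => n m Nn; apply: le_trans (tailb _ _ _) _; exact: hN'.
have hP : Kseries_to absK u (pairing absK a y d) by exact: (xgetPex 0 ex).
apply/ler_addgt0Pl => e e0.
have [N2 hN2] := hP e e0.
set n := maxn N N2.
have h1 : absK (\sum_(j < n) u j - pairing absK a y d) < e.
  by apply: hN2; rewrite leq_maxr.
have h2 : absK (\sum_(N <= j < n) u j) <= eps.
  apply: le_trans (tailb _ _ _) _; apply: hN => //.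
have -> : pairing absK a y d - \sum_(j < N) a j * y j ^+ d =
   - (\sum_(j < n) u j - pairing absK a y d) + (\sum_(j < n) u j - \sum_(j < N) u j).
  by rewrite /u; ring.
rewrite sum_nat_split ?leq_maxl //.
apply: le_trans (aKD _ _) _; rewrite aKN; apply: lerD => //; exact: ltW.
Qed.

Definition near_ok (q : \bar R) (M : R) (f : (nat -> K) -> K) (x : nat -> K) :=
  forall dl, 0 < dl -> exists N eta, 0 < eta /\ forall y, inBall q M y ->
    (forall j, (j < N)%N -> absK (y j - x j) < eta) -> absK (f y - f x) <= dl.

Lemma close_weaken (y x : nat -> K) N eta N1 eta1 : (N1 <= N)%N -> eta <= eta1 ->
  (forall j, (j < N)%N -> absK (y j - x j) < eta) ->
  (forall j, (j < N1)%N -> absK (y j - x j) < eta1).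
Proof.
move=> NN ee h j jN; apply: lt_le_trans ee; apply: h; exact: leq_trans jN NN.
Qed.

Lemma near_ok_cst q M c x : near_ok q M (fun _ => c) x.
Proof.
move=> dl dl0; exists 0%N, 1; split => // y _ _; by rewrite subrr aK0 ltW.
Qed.

Lemma near_ok_add q M f g x : near_ok q M f x -> near_ok q M g x ->
  near_ok q M (fun y => f y + g y) x.
Proof.
move=> hf hg dl dl0.
have [N1 [e1 [e10 h1]]] := hf _ (divr_gt0 dl0 (ltr0n _ 2)).
have [N2 [e2 [e20 h2]]] := hg _ (divr_gt0 dl0 (ltr0n _ 2)).
exists (maxn N1 N2), (Order.min e1 e2); split; first by rewrite lt_min e10 e20.
move=> y hy hc.
have -> : f y + g y - (f x + g x) = (f y - f x) + (g y - g x) by ring.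
apply: le_trans (aKD _ _) _; rewrite [dl]splitr; apply: lerD.
  by apply: h1 => //; apply: close_weaken hc; rewrite ?leq_maxl ?ge_min ?lexx.
by apply: h2 => //; apply: close_weaken hc; rewrite ?leq_maxr ?ge_min ?lexx ?orbT.
Qed.

Lemma near_ok_mul q M f g x : near_ok q M f x -> near_ok q M g x ->
  near_ok q M (fun y => f y * g y) x.
Proof.
move=> hf hg dl dl0.
set A := absK (f x); set B := absK (g x).
have A0 : 0 <= A by apply: aK_ge0.
have B0 : 0 <= B by apply: aK_ge0.
have A1 : 0 < A + 1 by apply: ltr_wpDl.
have B1 : 0 < B + 1 by apply: ltr_wpDl.
have dg0 : 0 < dl / 2 / (A + 1) by apply: divr_gt0 => //; apply: divr_gt0.
have df0 : 0 < Order.min 1 (dl / 2 / (B + 1)).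
  by rewrite lt_min ltr01 /=; apply: divr_gt0 => //; apply: divr_gt0.
have [N1 [e1 [e10 h1]]] := hf _ df0.
have [N2 [e2 [e20 h2]]] := hg _ dg0.
exists (maxn N1 N2), (Order.min e1 e2); split; first by rewrite lt_min e10 e20.
move=> y hy hc.
have hf' : absK (f y - f x) <= Order.min 1 (dl / 2 / (B + 1)).
  apply: h1 => //; apply: (@close_weaken y x _ _ _ _ _ _ hc).
    exact: leq_maxl.
  by rewrite ge_min lexx.
have hg' : absK (g y - g x) <= dl / 2 / (A + 1).
  apply: h2 => //; apply: (@close_weaken y x _ _ _ _ _ _ hc).
    exact: leq_maxr.
  by rewrite ge_min lexx orbT.
have hfy : absK (f y) <= A + 1.
  have -> : f y = f x + (f y - f x) by ring.
  apply: le_trans (aKD _ _) _; rewrite lerD2l.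
  by apply: le_trans hf' _; rewrite ge_min lexx.
have -> : f y * g y - f x * g x = f y * (g y - g x) + g x * (f y - f x) by ring.
apply: le_trans (aKD _ _) _; rewrite !aKM [dl]splitr; apply: lerD.
  apply: le_trans (ler_pM (aK_ge0 _) (aK_ge0 _) hfy hg') _.
  by rewrite mulrC divfK ?gt_eqF.
have hm : Order.min 1 (dl / 2 / (B + 1)) <= dl / 2 / (B + 1) by rewrite ge_min lexx orbT.
apply: le_trans (ler_wpM2l B0 (le_trans hf' hm)) _.
rewrite mulrA ler_pdivrMr // mulrC ler_pM2l ?divr_gt0 // lerDl //.
Qed.

Lemma near_ok_ext q M f g x : (forall y, f y = g y) -> near_ok q M f x -> near_ok q M g x.
Proof.
move=> e h dl dl0; have [N [eta [eta0 hh]]] := h dl dl0.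
exists N, eta; split => // y hy hc; rewrite -!e; exact: hh.
Qed.

Lemma near_ok_big (I0 : Type) (r : seq I0) (P : pred I0) (op : K -> K -> K) (idx : K)
  (F : I0 -> (nat -> K) -> K) q M x :
  (forall f g, near_ok q M f x -> near_ok q M g x -> near_ok q M (fun y => op (f y) (g y)) x) ->
  (forall i, P i -> near_ok q M (F i) x) ->
  near_ok q M (fun y => \big[op/idx]_(i <- r | P i) F i y) x.
Proof.
move=> hop hF; elim: r => [|i r IH].
  apply: (@near_ok_ext q M (fun _ => idx)); first by move=> y; rewrite big_nil.
  exact: near_ok_cst.
case Pi: (P i).
  apply: (@near_ok_ext q M (fun y => op (F i y) (\big[op/idx]_(j <- r | P j) F j y))).
    by move=> y; rewrite big_cons Pi.
  by apply: hop => //; apply: hF.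
apply: (@near_ok_ext q M (fun y => \big[op/idx]_(j <- r | P j) F j y)) => //.
by move=> y; rewrite big_cons Pi.
Qed.

Lemma near_ok_pairing q M D d (a : nat -> K) x : 0 < M -> (0 < q)%E -> (1 <= d <= D)%N ->
  (D%:R%:E < q)%E -> lp_mem absK (dual_exp q d) a -> inBall q M x ->
  near_ok q M (fun y => pairing absK a y d) x.
Proof.
move=> M0 q0 hd hq ha hx dl dl0.
have dl3 : 0 < dl / 3 by apply: divr_gt0.
have [N hN] := @pairing_approx q M D d a M0 hd hq ha _ dl3.
set SA := \sum_(j < N) absK (a j).
set C0 := d%:R * M ^+ d.-1.
have SA0 : 0 <= SA by apply: sumr_ge0 => j _; exact: aK_ge0.
have C00 : 0 <= C0 by apply: mulr_ge0; rewrite ?ler0n ?exprn_ge0 ?(ltW M0).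
have SC1 : 0 < SA * C0 + 1 by apply: ltr_wpDl => //; apply: mulr_ge0.
exists N, (dl / 3 / (SA * C0 + 1)); split; first exact: divr_gt0.
move=> y hy hc.
have hxb := @inBall_bound q M x q0 M0 hx.
have hyb := @inBall_bound q M y q0 M0 hy.
set Sy := \sum_(j < N) a j * y j ^+ d.
set Sx := \sum_(j < N) a j * x j ^+ d.
have hfin : absK (Sy - Sx) <= dl / 3.
  rewrite /Sy /Sx -sumrB.
  apply: le_trans; first exact: aK_sum.
  apply: (@le_trans _ _ (\sum_(j < N) absK (a j) * (C0 * (dl / 3 / (SA * C0 + 1))))).
    apply: ler_sum => j _; rewrite -mulrBr aKM; apply: ler_wpM2l; first exact: aK_ge0.
    apply: le_trans (@aK_powB (x j) (y j) d M (hxb j) (hyb j)) _.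
    by apply: ler_wpM2l => //; apply: ltW; apply: hc.
  rewrite -mulr_suml -/SA mulrA.
  rewrite !mulrA ler_pdivrMr //.
  have P0 : 0 <= SA * d%:R * M ^+ d.-1 by rewrite -mulrA; apply: mulr_ge0.
  move: (SA * d%:R * M ^+ d.-1) P0 => P P0; nra.
  by move: SC1; rewrite /C0 mulrA.
rewrite /=; have -> : pairing absK a y d - pairing absK a x d =
  (pairing absK a y d - Sy) + (Sy - Sx) - (pairing absK a x d - Sx) by ring.
apply: le_trans (aKB _ _) _; apply: le_trans (lerD (aKD _ _) (lexx _)) _.
have -> : dl = dl / 3 + dl / 3 + dl / 3 by field.
by apply: lerD; [apply: lerD => //; exact: hN | exact: hN].
Qed.

Lemma near_ok_poly q M D (a : nat -> nat -> K) x : 0 < M -> (0 < q)%E ->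
  (D%:R%:E < q)%E -> (forall d, (1 <= d <= D)%N -> lp_mem absK (dual_exp q d) (a d)) ->
  inBall q M x -> near_ok q M (fun y => mult_poly absK D a y) x.
Proof.
move=> M0 q0 hq ha hx; rewrite /mult_poly.
apply: near_ok_big => [f g|k _]; first exact: near_ok_add.
apply: near_ok_big => [f g|t /andP[/forallP tpos _]]; first exact: near_ok_add.
apply: near_ok_big => [f g|l _]; first exact: near_ok_mul.
apply: (@near_ok_pairing q M D) => //; last apply: ha;
  by rewrite tpos -ltnS ltn_ord.
Qed.

Lemma powR_cont (r c e : R) : 0 < r -> 0 <= c -> 0 < e ->
  exists eta, 0 < eta /\ forall s, 0 <= s -> `|s - c| < eta -> `|s `^ r - c `^ r| < e.
Proof.
move=> r0; rewrite le_eqVlt => /orP[/eqP <-|c0] e0.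
  exists (e `^ r^-1); split; first exact: powR_gt0.
  move=> s s0; rewrite subr0 ger0_norm // => hs.
  rewrite powR0 ?gt_eqF // subr0 ger0_norm ?powR_ge0 //.
  rewrite -(@powRK r e r0 (ltW e0)); apply: gt0_ltr_powR; rewrite ?nnegrE ?powR_ge0 //.
have h : {for c, continuous (expR \o (fun s => r * ln s))}.
  apply: continuous_comp; last exact: continuous_expR.
  apply: cvgMr; exact: continuous_ln.
have H : \forall s \near c, `|(expR \o (fun s => r * ln s)) c - (expR \o (fun s => r * ln s)) s| < e.
  exact: (@cvgr_dist_lt _ _ _ _ _ _ _ h e e0).
move: H => /nbhs_ballP [eta /= eta0 heta]; exists (Order.min eta c); split.
  by rewrite lt_min eta0 c0.
move=> s s0 hs.
have hs1 : `|s - c| < eta by apply: lt_le_trans hs _; rewrite ge_min lexx.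
have hs2 : `|s - c| < c by apply: lt_le_trans hs _; rewrite ge_min lexx orbT.
have sp : 0 < s.
  rewrite ltNge; apply/negP => sle; move: hs2; rewrite ler0_norm ?subr_le0; last by apply: le_trans sle _; exact: ltW.
  by rewrite opprB ltrBlDr ltrDl ltNge sle.
rewrite /powR !gt_eqF // distrC; apply: heta.
by rewrite /ball /= distrC.
Qed.

Lemma psum_cont (r : R) (x : nat -> K) n e : 0 < r -> 0 < e ->
  exists eta, 0 < eta /\ forall y : nat -> K, (forall j, (j < n)%N -> absK (y j - x j) < eta) ->
   `|\sum_(j < n) absK (y j) `^ r - \sum_(j < n) absK (x j) `^ r| < e.
Proof.
move=> r0; elim: n e => [|n IH] e e0.
  by exists 1; split => // y _; rewrite !big_ord0 subrr normr0.
have e2 : 0 < e / 2 by apply: divr_gt0.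
have [eta1 [eta10 h1]] := IH _ e2.
have [eta2 [eta20 h2]] := @powR_cont r (absK (x n)) (e / 2) r0 (aK_ge0 _) e2.
exists (Order.min eta1 eta2); split; first by rewrite lt_min eta10 eta20.
move=> y hy; rewrite !big_ord_recr /=.
have -> : \sum_(i < n) absK (y i) `^ r + absK (y n) `^ r -
   (\sum_(i < n) absK (x i) `^ r + absK (x n) `^ r) =
   (\sum_(i < n) absK (y i) `^ r - \sum_(i < n) absK (x i) `^ r) +
   (absK (y n) `^ r - absK (x n) `^ r) by ring.
apply: le_lt_trans (ler_normD _ _) _; rewrite [e]splitr; apply: ltrD.
  apply: h1 => j jn; apply: lt_le_trans (hy j _) _; first exact: ltn_trans jn (ltnSn n).
  by rewrite ge_min lexx.
apply: h2; first exact: aK_ge0.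
have hn : absK (y n - x n) < eta2 by apply: lt_le_trans (hy n (ltnSn n)) _; rewrite ge_min lexx orbT.
apply: le_lt_trans hn; rewrite ler_norml; apply/andP; split.
  rewrite lerNl opprB aK_sym; exact: aK_sub_ge.
exact: aK_sub_ge.
Qed.

Variables (re im : K -> R) (mk : R -> R -> K).
Hypothesis mkK : forall z, mk (re z) (im z) = z.
Hypothesis mkB : forall u v u' v', mk u v - mk u' v' = mk (u - u') (v - v').
Hypothesis amk : forall u v, absK (mk u v) <= `|u| + `|v|.
Hypothesis are : forall z, `|re z| <= absK z.
Hypothesis aim : forall z, `|im z| <= absK z.

Local Open Scope classical_set_scope.

Let T := {ptws (nat * bool) -> R}.

Lemma coord_near (t0 : T) k (e : R) : 0 < e -> \forall t \near t0, `|t0 k - t k| < e.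
Proof.
move=> e0.
have h : (fun g : T => g k) @ nbhs t0 --> t0 k.
  by move: k; apply/pointwise_cvgP.
have := @cvgr_dist_lt _ _ _ _ _ (fun g : T => g k) (t0 k) h e e0.
move=> H; apply: H.
Qed.

Lemma boxc (M : R) : compact [set t : T | forall k, `[-M, M] (t k)].
Proof.
have := @tychonoff (nat * bool)%type (fun _ => R) (fun _ => `[-M, M]) (fun _ => @segment_compact R (-M) M).
by [].
Qed.

Let X (t : T) : nat -> K := fun j => mk (t (j, false)) (t (j, true)).

Lemma near_X (t0 : T) N eta : 0 < eta ->
  \forall t \near t0, forall j, (j < N)%N -> absK (X t j - X t0 j) < eta.
Proof.
move=> eta0; have e2 : 0 < eta / 2 by apply: divr_gt0.
have FI : Filter (nbhs t0) by exact: prod_topology_filter.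
elim: N => [|N IH]; first by apply: (@nearW _ _ _ FI) => t j.
have h1 := @coord_near t0 (N, false) (eta / 2) e2.
have h2 := @coord_near t0 (N, true) (eta / 2) e2.
have h3 := @filterI _ _ FI _ _ IH (@filterI _ _ FI _ _ h1 h2).
apply: (@filterS _ _ FI _ _ _ h3) => t [hI [ha hb]] j.
rewrite ltnS leq_eqVlt => /orP[/eqP ->|jN]; last exact: hI.
rewrite /X mkB; apply: le_lt_trans (amk _ _) _.
by rewrite [eta]splitr; apply: ltrD; rewrite distrC.
Qed.

Theorem main_generic : theorem4_stmt absK.
Proof.
move=> D q I a b M hD hq hI ha M0 happ.
have q0 : (0 < q)%E.
  by apply: lt_trans hq; rewrite lte_fin ltr0n.
pose Box := [set t : T | forall k, `[-M, M] (t k)].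
pose G (p : set I * R) := [set t : T | Box t /\ inBall q M (X t) /\
   forall i, p.1 i -> absK (mult_poly absK D (a i) (X t) - b i) <= p.2].
pose Dset := [set p : set I * R | finite_set p.1 /\ 0 < p.2].
have FF : Filter (filter_from Dset G).
  apply: filter_from_filter; first by exists (set0, 1); split => //; exact: finite_set0.
  move=> [S1 e1] [S2 e2] [fS1 e10] [fS2 e20]; exists (S1 `|` S2, Order.min e1 e2).
    by split; [rewrite finite_setU | rewrite /= lt_min e10 e20].
  move=> t [hB [hb hP]]; split; (split; [done | split; [done |]]) => i Si;
    (apply: le_trans (hP i _) _; [by [left | right] | by rewrite ge_min lexx ?orbT]).
have PF : ProperFilter (filter_from Dset G).
  apply: filter_from_proper => -[S e] [fS e0].
  have [x [hx [hn hP]]] := happ e S e0 fS.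
  have hxb := @inBall_of_lp q M x q0 M0 hx hn.
  pose t : T := fun k => if k.2 then im (x k.1) else re (x k.1).
  have eX : X t = x by apply: funext => j; rewrite /X /t /= mkK.
  exists t; split; [|split]; rewrite ?eX //.
  have hb := @inBall_bound q M x q0 M0 hxb.
  move=> [j []] /=; rewrite in_itv /= -ler_norml.
    exact: le_trans (aim _) (hb j).
  exact: le_trans (are _) (hb j).
have FB : filter_from Dset G Box.
  exists (set0, 1); first by split => //; exact: finite_set0.
  by move=> t [].
have [t0 [Bt0 clt0]] := @boxc M _ PF FB.
have FG : forall p, Dset p -> filter_from Dset G (G p) by move=> p Dp; exists p.
have cl : forall A B, filter_from Dset G A -> nbhs t0 B -> exists t, A t /\ B t.
  move=> A B hA hB; have [t [h1 h2]] := clt0 A B hA hB; by exists t.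
have D01 : Dset (set0, 1) by split => //; exact: finite_set0.
have hX0 : inBall q M (X t0).
  case E: q => [r||] //=; last by rewrite E in q0.
    rewrite E lte_fin in q0.
    move=> n; apply/ler_addgt0Pr => e e0.
    have [eta [eta0 heta]] := @psum_cont r (X t0) n e q0 e0.
    have [t [[_ [hb _]] ht]] := cl _ _ (FG _ D01) (@near_X t0 n eta eta0).
    have h := heta (X t) ht; rewrite E /= in hb; have := hb n.
    move: h; set u := \sum_(j < n) absK (X t j) `^ r; set v := \sum_(j < n) absK (X t0 j) `^ r => h hu.
    move: h; rewrite ltr_norml => /andP[h1 h2]; lra.
  move=> j; apply/ler_addgt0Pr => e e0.
  have [t [[_ [hb _]] ht]] := cl _ _ (FG _ D01) (@near_X t0 j.+1 e e0).
  rewrite E /= in hb.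
  have -> : X t0 j = X t j + (X t0 j - X t j) by ring.
  apply: le_trans (aKD _ _) _; apply: lerD; first exact: hb.
  by rewrite aK_sym; apply: ltW; apply: ht.
exists (X t0); have [lm ln] := @lp_of_inBall q M (X t0) q0 M0 hX0; split => //; split => // i.
apply/eqP; rewrite -subr_eq0; apply/eqP; apply: aK_eq0; apply/eqP; rewrite eq_le aK_ge0 andbT; apply/ler_addgt0Pr => e e0; rewrite add0r.
have e2 : 0 < e / 2 by apply: divr_gt0.
have [N [eta [eta0 hN]]] := @near_ok_poly q M D (a i) (X t0) M0 q0 hq (ha i) hX0 _ e2.
have Di : Dset ([set i], e / 2) by split => //; exact: finite_set1.
have [t [[_ [hb hP]] ht]] := cl _ _ (FG _ Di) (@near_X t0 N eta eta0).
have h1 := hN (X t) hb ht.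
have h2 := hP i erefl.
have -> : mult_poly absK D (a i) (X t0) - b i =
  (mult_poly absK D (a i) (X t) - b i) - (mult_poly absK D (a i) (X t) - mult_poly absK D (a i) (X t0)) by ring.
apply: le_trans (aKB _ _) _; rewrite [e]splitr; exact: lerD.
Qed.
End Generic.

Lemma RCauchy (R : realType) (u : nat -> R) :
  (forall e, 0 < e -> exists N, forall n m, (N <= n)%N -> `|\sum_(n <= j < m) u j| <= e) ->
  exists l, Kseries_to (fun x : R => `|x|) u l.
Proof.
move=> H.
have hc : cvgn (series u).
  apply/cauchy_cvgP; apply/cauchy_seriesP => e e0.
  have [N hN] := H (e / 2) (divr_gt0 e0 (ltr0n _ 2)).
  exists ([set n : nat | (N <= n)%N]%classic, [set n : nat | (N <= n)%N]%classic); first by split; exists N.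
  move=> [n m] /= [Nn Nm]; apply: le_lt_trans (hN n m Nn) _.
  by rewrite ltr_pdivrMr // ltr_pMr // ltr1n.
exists (limn (series u)) => e e0.
have := @cvgr_dist_lt _ _ _ _ _ (series u) _ hc e e0.
move=> [N _ hN]; exists N => n Nn; rewrite distrC; have := hN n Nn; by rewrite /= seriesEord.
Qed.

Lemma real_case (R : realType) : theorem4_stmt (fun x : R => `|x|).
Proof.
apply: (@main_generic R R (fun x => `|x|) _ _ _ _ _ _ (@RCauchy R) id (fun _ => 0) (fun u _ => u)).
- exact: normr0.
- by move=> x; exact: normr_ge0.
- by move=> x /normr0_eq0.
- by move=> x y; exact: ler_normD.
- by move=> x y; exact: normrM.
- by move=> x; exact: normrN.
- by [].
- by [].
- by move=> u v; rewrite lerDl.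
- by [].
- by move=> z; rewrite normr0.
Qed.

Section Cplx.
Variable R : realType.
Local Open Scope complex_scope.
Let absC (z : R[i]) : R := complex.Re `|z|.

Lemma absCE (z : R[i]) : absC z = Num.sqrt (complex.Re z ^+ 2 + complex.Im z ^+ 2).
Proof. by rewrite /absC normc_def. Qed.

Lemma absC_mk (u v : R) : absC (u +i* v) <= `|u| + `|v|.
Proof.
rewrite absCE /=.
have h : 0 <= `|u| + `|v| by apply: addr_ge0.
rewrite -(ger0_norm h) -sqrtr_sqr.
rewrite ler_sqrt ?sqr_ge0 //.
rewrite sqrrD !real_normK ?num_real //.
by rewrite -addrA [_ *+ 2 + _]addrC addrA lerDl mulrn_wge0 // mulr_ge0.
Qed.

Lemma absC_ge0 (z : R[i]) : 0 <= absC z.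
Proof. by rewrite absCE sqrtr_ge0. Qed.

Lemma absC_re (z : R[i]) : `|complex.Re z| <= absC z.
Proof.
rewrite absCE -sqrtr_sqr ler_sqrt ?addr_ge0 ?sqr_ge0 //.
by rewrite lerDl sqr_ge0.
Qed.

Lemma absC_im (z : R[i]) : `|complex.Im z| <= absC z.
Proof.
rewrite absCE -sqrtr_sqr ler_sqrt ?addr_ge0 ?sqr_ge0 //.
by rewrite lerDr sqr_ge0.
Qed.

Lemma absC_eq0 (z : R[i]) : absC z = 0 -> z = 0.
Proof.
move=> H; apply/normr0_eq0; by rewrite normc_def -absCE H.
Qed.

Lemma absCD (x y : R[i]) : absC (x + y) <= absC x + absC y.
Proof.
have := ler_normD x y; rewrite lecE => /andP[_ h].
by move: h; rewrite /absC !normc_def /=.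
Qed.

Lemma absCM (x y : R[i]) : absC (x * y) = absC x * absC y.
Proof. by rewrite /absC normrM !normc_def /= mulr0 subr0. Qed.

Lemma absCN (x : R[i]) : absC (- x) = absC x.
Proof. by rewrite /absC normrN. Qed.

Lemma absC0 : absC (0 : R[i]) = 0.
Proof. by rewrite /absC normr0. Qed.

Lemma mkCK (z : R[i]) : (complex.Re z) +i* (complex.Im z) = z.
Proof. by case: z. Qed.

Lemma mkCB (u v u' v' : R) : (u +i* v) - (u' +i* v') = (u - u') +i* (v - v').
Proof. by []. Qed.

Lemma Re_sum n m (u : nat -> R[i]) : complex.Re (\sum_(n <= j < m) u j) = \sum_(n <= j < m) complex.Re (u j).
Proof.
apply: (big_morph (fun z : R[i] => complex.Re z)) => //.
by move=> [a b] [c d].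
Qed.

Lemma Im_sum n m (u : nat -> R[i]) : complex.Im (\sum_(n <= j < m) u j) = \sum_(n <= j < m) complex.Im (u j).
Proof.
apply: (big_morph (fun z : R[i] => complex.Im z)) => //.
by move=> [a b] [c d].
Qed.

Lemma absC_le (z : R[i]) : absC z <= `|complex.Re z| + `|complex.Im z|.
Proof. by rewrite -{1}(mkCK z); exact: absC_mk. Qed.

Lemma CCauchy (u : nat -> R[i]) :
  (forall e, 0 < e -> exists N, forall n m, (N <= n)%N -> absC (\sum_(n <= j < m) u j) <= e) ->
  exists l, Kseries_to absC u l.
Proof.
move=> H.
have [l1 h1] : exists l, Kseries_to (fun x : R => `|x|) (fun j => complex.Re (u j)) l.
  apply: RCauchy => e e0; have [N hN] := H e e0; exists N => n m Nn.
  rewrite -Re_sum; apply: le_trans (absC_re _) _; exact: hN.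
have [l2 h2] : exists l, Kseries_to (fun x : R => `|x|) (fun j => complex.Im (u j)) l.
  apply: RCauchy => e e0; have [N hN] := H e e0; exists N => n m Nn.
  rewrite -Im_sum; apply: le_trans (absC_im _) _; exact: hN.
exists (l1 +i* l2) => e e0.
have e2 : 0 < e / 2 by apply: divr_gt0.
have [N1 hN1] := h1 _ e2; have [N2 hN2] := h2 _ e2.
exists (maxn N1 N2) => n hn.
apply: le_lt_trans (absC_le _) _.
have := hN1 n (leq_trans (leq_maxl _ _) hn); have := hN2 n (leq_trans (leq_maxr _ _) hn).
rewrite -(big_mkord xpredT (fun j => complex.Re (u j))) -(big_mkord xpredT (fun j => complex.Im (u j))).
rewrite -Re_sum -Im_sum -(big_mkord xpredT u).
case: (\sum_(0 <= i < n) u i) => a b /= hb ha.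
rewrite [e]splitr; exact: ltrD.
Qed.

Lemma cplx_case : theorem4_stmt (fun z : R[i] => complex.Re `|z|).
Proof.
exact: (@main_generic R R[i] absC absC0 absC_ge0 absC_eq0 absCD absCM absCN CCauchy
  (fun z => complex.Re z) (fun z => complex.Im z) (fun u v => u +i* v)
  mkCK mkCB absC_mk absC_re absC_im).
Qed.
End Cplx.

Theorem theorem4 (R : realType) :
  theorem4_stmt (fun x : R => `|x|) /\
  theorem4_stmt (fun z : R[i] => complex.Re `|z|).
Proof. split; [exact: real_case | exact: cplx_case]. Qed.
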